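(* Let $d\geq1$, let $\mathcal{D}$ be a dyadic lattice in $\mathbb{R}^d$, and fix $j\in\{1,\dots,3^d\}$. Suppose $f,g,h$ are bounded compactly supported functions supported in a cube $\tilde{Q}\in\mathcal{D}$. Then, if $Q_0\in\mathcal{D}$ is a sufficiently large ancestor of $\tilde{Q}$, \[ \langle \mathcal{A}_{*,Q'}^j(f,g),h\rangle=0\quad\text{for all } Q'\in\mathcal{D} \text{ with } Q_0\subset Q'. \]
   Context: $d\sigma$ is the normalized surface measure on $S^{2d-1}\subset\mathbb{R}^d\times\mathbb{R}^d$ and $\mathcal{A}_t(f,g)(x)=\int_{S^{2d-1}} f(x-ty)g(x-tz)\,d\sigma(y,z)$. A dyadic lattice $\mathcal{D}$ is a collection of cubes with sidelengths $2^m$, $m\in\mathbb{Z}$, such that the cubes of each fixed sidelength partition $\mathbb{R}^d$ and each cube of sidelength $2^m$ is the union of $2^d$ cubes of $\mathcal{D}$ of sidelength $2^{m-1}$. For $Q\in\mathcal{D}$ with $\ell(Q)=2^m$, $\frac13Q$ is the concentric cube of sidelength $\ell(Q)/3$, and $(\frac13Q)(1),\dots,(\frac13Q)(3^d)$ is a fixed enumeration (by relative position) of the $3^d$ cubes of sidelength $\ell(Q)/3$ partitioning $Q$ into a $3\times\cdots\times3$ grid. Define $\mathcal{A}^j_{*,Q}(f,g)(x)=\sup_{t\in[2^{m-4},2^{m-3}]}\mathcal{A}_t(f\chi_{\frac13Q},g\chi_{(\frac13Q)(j)})(x)$. $\langle\cdot,\cdot\rangle$ is the $L^2$ pairing. 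*)

(* Defs.v *)
From HB Require Import structures.
From mathcomp Require Import all_boot all_order all_algebra.
From mathcomp Require Import all_classical all_reals all_analysis.
Set Implicit Arguments. Unset Strict Implicit. Unset Printing Implicit Defensive.
Import Order.TTheory GRing.Theory Num.Theory.
Local Open Scope classical_set_scope.
Local Open Scope ring_scope.

Section Defs.
Variable R : realType.

(** Points of R^n are row vectors 'rV[R]_n; coordinate i of x is x 0 i. *)

Definition enorm (n : nat) (u : 'rV[R]_n) : R :=
  Num.sqrt (\sum_(i < n) u 0 i ^+ 2).

(** Lebesgue integral over R^n, written as the iterated one-dimensional
    Lebesgue integral (equal to the n-dimensional Lebesgue integral by
    Fubini--Tonelli for nonnegative measurable / integrable integrands). *)
Fixpoint rint (n : nat) : ('rV[R]_n -> \bar R) -> \bar R :=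
  match n return ('rV[R]_n -> \bar R) -> \bar R with
  | 0 => fun F => F 0
  | n'.+1 => fun F =>
      (\int[@lebesgue_measure R]_(t in setT)
         rint (fun v : 'rV[R]_n' => F (row_mx (\row_(_ < 1) t) v)))%E
  end.

Definition ball_vol (n : nat) : R :=
  fine (rint (fun u : 'rV[R]_n => if (enorm u <= 1)%R then 1%E else 0%E)).

(** Integral against the normalized surface measure of S^{n-1} in R^n,
    via polar coordinates:  int_S F dsigma = |B|^{-1} int_B F(u/|u|) du. *)
Definition sphere_avg (n : nat) (F : 'rV[R]_n -> \bar R) : \bar R :=
  (((ball_vol n)^-1)%:E *
   rint (fun u : 'rV[R]_n =>
          if (enorm u <= 1)%R then F ((enorm u)^-1 *: u) else 0))%E.

Definition sph_avg (d : nat) (t : R) (f g : 'rV[R]_d -> R) (x : 'rV[R]_d)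
  : \bar R :=
  sphere_avg (fun w : 'rV[R]_(d + d) =>
     (f (x - t *: lsubmx w) * g (x - t *: rsubmx w))%:E).

Definition box (d : nat) (a : 'rV[R]_d) (l : R) : set 'rV[R]_d :=
  [set x | forall i, a 0 i <= x 0 i < a 0 i + l].

(** A cube of a dyadic lattice: lower corner and exponent m (side 2^m). *)
Definition dcube (d : nat) := ('rV[R]_d * int)%type.
Definition side (d : nat) (Q : dcube d) : R := (2 : R) ^ Q.2.
Definition cset (d : nat) (Q : dcube d) : set 'rV[R]_d := box Q.1 (side Q).

Definition dyadic_lattice (d : nat) (D : set (dcube d)) : Prop :=
  (forall (m : int) (x : 'rV[R]_d),
     exists! Q, D Q /\ Q.2 = m /\ cset Q x) /\
  (forall Q, D Q ->
     exists s : seq (dcube d),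
       [/\ size s = (2 ^ d)%N, uniq s,
           (forall Q', Q' \in s -> D Q' /\ Q'.2 = Q.2 - 1) &
           cset Q = \bigcup_(Q' in [set Q' | Q' \in s]) cset Q']).

Definition third (d : nat) (Q : dcube d) : set 'rV[R]_d :=
  box (Q.1 + (side Q / 3) *: const_mx 1) (side Q / 3).

(** The subcube (1/3 Q)(k) of the 3 x ... x 3 grid of Q, indexed by its
    relative position k : 'I_d -> 'I_3. *)
Definition third_sub (d : nat) (Q : dcube d) (k : {ffun 'I_d -> 'I_3})
  : set 'rV[R]_d :=
  box (Q.1 + (side Q / 3) *: \row_i ((k i : nat)%:R)) (side Q / 3).

Definition restr (d : nat) (f : 'rV[R]_d -> R) (A : set 'rV[R]_d)
  : 'rV[R]_d -> R := fun x => if `[< A x >] then f x else 0.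

Definition maxop (d : nat) (Q : dcube d) (k : {ffun 'I_d -> 'I_3})
  (f g : 'rV[R]_d -> R) (x : 'rV[R]_d) : \bar R :=
  ereal_sup [set sph_avg t (restr f (third Q)) (restr g (third_sub Q k)) x
            | t in `[(2 : R) ^ (Q.2 - 4), (2 : R) ^ (Q.2 - 3)]].

Definition pairing (d : nat) (F : 'rV[R]_d -> \bar R) (h : 'rV[R]_d -> R)
  : \bar R := rint (fun x => (F x * (h x)%:E)%E).

End Defs.

(* Main.v *)
Require Import Defs.
From HB Require Import structures.
From mathcomp Require Import all_boot all_order all_algebra.
From mathcomp Require Import all_classical all_reals all_analysis.
From mathcomp Require Import lra.
Import Order.TTheory GRing.Theory Num.Theory.
Local Open Scope classical_set_scope.
Local Open Scope ring_scope.

Section H.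
Variable R : realType.

Lemma rint0 n : rint (fun _ : 'rV[R]_n => 0%E) = 0%E.
Proof.
elim: n => [//|n IH] /=.
rewrite IH; exact: integral0.
Qed.

Lemma int_pt0 (phi : R -> \bar R) : (forall t, t != 0 -> phi t = 0%E) ->
  (\int[@lebesgue_measure R]_(t in setT) phi t = 0)%E.
Proof.
move=> H.
rewrite -(@integral_setD1 _ _ 0); last first.
- refine (@eq_measurable_fun _ _ _ (measurable_realfun.constructive_ereal_extended__canonical__measurable_structure_SigmaRing R) _ (fun=> 0%E) phi _ _); last exact: measurable_cst.
  move=> x; rewrite inE /= => -[_ /eqP x0]; by rewrite H.
- apply: measurableD => //; exact: measurable_set1.
rewrite (eq_integral (cst 0%E)); first exact: integral0.
move=> x; rewrite inE /= => -[_ /eqP x0]; by rewrite H.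
Qed.

Lemma rint_pt n (hn : (0 < n)%N) (G : 'rV[R]_n -> \bar R) :
  (forall u, u != 0 -> G u = 0%E) -> rint G = 0%E.
Proof.
case: n hn G => // n _ G H /=.
apply: int_pt0 => t t0.
transitivity (rint (fun _ : 'rV[R]_n => 0%E)); last exact: rint0.
congr rint; apply: funext => v; apply: H.
apply: contra t0 => /eqP E; apply/eqP.
have := congr1 (fun M : 'rV[R]_(1 + n) => M 0 (lshift n ord0)) E.
by rewrite /= row_mxEl !mxE.
Qed.


Lemma sumsq_norm n (u : 'rV[R]_n) : u != 0 ->
  \sum_i ((enorm u)^-1 *: u) 0 i ^+ 2 = 1.
Proof.
move=> u0.
have S0 : 0 <= \sum_i u 0 i ^+ 2 by apply: sumr_ge0 => i _; exact: sqr_ge0.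
have Sn0 : \sum_i u 0 i ^+ 2 != 0.
  apply: contra u0 => /eqP E; apply/eqP/rowP => i.
  have := @psumr_eq0P _ _ xpredT (fun i => u 0 i ^+ 2) (fun i _ => sqr_ge0 (u 0 i)) E i isT.
  by move/eqP; rewrite sqrf_eq0 mxE => /eqP.
under eq_bigr do rewrite mxE exprMn.
rewrite -mulr_sumr exprVn /enorm sqr_sqrtr //.
exact: mulVf.
Qed.

Lemma box_side d (hd : (0 < d)%N) (a b : 'rV[R]_d) (l l' : R) :
  0 < l -> box a l `<=` box b l' -> l <= l'.
Proof.
move=> l0 sub; rewrite leNgt; apply/negP => ll.
pose i0 : 'I_d := Ordinal hd.
have ha : box a l a by move=> i; rewrite lexx /= ltrDl.
have := sub a ha i0; case/andP => h3 h4.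
pose c := (l + l') / 2.
have hy : box a l (a + c *: const_mx 1).
  move=> i; rewrite !mxE mulr1.
  apply/andP; split.
  - rewrite lerDl /c; lra.
  - rewrite ltrD2l /c; lra.
have := sub _ hy i0; rewrite !mxE mulr1; case/andP => h5 h6.
rewrite /c in h6; lra.
Qed.

Lemma sq_bound (a s p q : R) : a <= p < a + s -> a <= p - q < a + s ->
  q ^+ 2 <= s ^+ 2.
Proof. move=> /andP[h1 h2] /andP[h3 h4]; nra. Qed.

Lemma core d (f g : 'rV[R]_d -> R) (A B : set 'rV[R]_d) (Qt : dcube R d)
  (x : 'rV[R]_d) (t : R) (w : 'rV[R]_(d + d)) :
  (forall y, ~ cset Qt y -> f y = 0) -> (forall y, ~ cset Qt y -> g y = 0) ->
  cset Qt x -> (side Qt) ^+ 2 *+ (d + d) < t ^+ 2 ->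
  \sum_i w 0 i ^+ 2 = 1 ->
  restr f A (x - t *: lsubmx w) * restr g B (x - t *: rsubmx w) = 0.
Proof.
move=> sf sg xin lt sw.
set y := x - _; set z := x - _.
have [yin|yout] := pselect (cset Qt y); last by rewrite /restr sf // if_same mul0r.
have [zin|zout] := pselect (cset Qt z); last by rewrite /restr [g z]sg // if_same mulr0.
exfalso; move: lt; apply/negP; rewrite -leNgt.
rewrite -[t ^+ 2]mulr1 -sw mulr_sumr big_split_ord /= mulrnDr.
have E : side Qt ^+ 2 *+ d = \sum_(i < d) side Qt ^+ 2 by rewrite sumr_const card_ord.
rewrite E; apply: lerD.
- apply: ler_sum => i _; rewrite -exprMn.
  have h1 := xin i; have h2 := yin i; rewrite /y !mxE in h2.
  exact: sq_bound h1 h2.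
- apply: ler_sum => i _; rewrite -exprMn.
  have h1 := xin i; have h2 := zin i; rewrite /z !mxE in h2.
  exact: sq_bound h1 h2.
Qed.

End H.

Theorem lemma4p1 (R : realType) (d : nat) (hd : (0 < d)%N)
  (D : set (dcube R d)) (hD : dyadic_lattice D)
  (k : {ffun 'I_d -> 'I_3})
  (f g h : 'rV[R]_d -> R) (Qt : dcube R d) (hQt : D Qt)
  (bf : exists M : R, forall x, `|f x| <= M)
  (bg : exists M : R, forall x, `|g x| <= M)
  (bh : exists M : R, forall x, `|h x| <= M)
  (sf : forall x, ~ cset Qt x -> f x = 0)
  (sg : forall x, ~ cset Qt x -> g x = 0)
  (sh : forall x, ~ cset Qt x -> h x = 0) :
  exists N : int, forall Q0 : dcube R d,
    D Q0 -> cset Qt `<=` cset Q0 -> N <= Q0.2 ->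
    forall Q' : dcube R d, D Q' -> cset Q0 `<=` cset Q' ->
      pairing (maxop Q' k f g) h = 0%E.
Proof.
pose B := side Qt ^+ 2 *+ (d + d) + 1.
have B1 : 1 <= B by rewrite lerDr mulrn_wge0 // sqr_ge0.
have [n hn] : exists n : nat, B <= 2 ^+ n.
  exists (Num.Def.archi_bound B).
  apply: ltW; apply: lt_le_trans (archi_boundP (le_trans ler01 B1)) _.
  rewrite -natrX ler_nat; apply: ltnW; exact: ltn_expl.
exists (n%:Z + 4) => Q0 DQ0 sub0 hN Q' DQ' sub'.
have sQ : side Q0 <= side Q' by apply: (@box_side R d hd _ _ _ _ _ sub'); exact: exprz_gt0.
have eQ : Q0.2 <= Q'.2 by move: sQ; rewrite /side ler_eXz2l //; lra.
have tge : forall t, t \in `[(2 : R) ^ (Q'.2 - 4), (2 : R) ^ (Q'.2 - 3)] -> B <= t.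
  move=> t; rewrite in_itv /= => /andP[t1 _].
  apply: (le_trans hn); apply: le_trans t1.
  have -> : (2:R) ^+ n = 2 ^ (n%:Z) by [].
  rewrite ler_eXz2l //; last by lra.
  have := le_trans hN eQ; lra.
have sph0 : forall x t, cset Qt x -> B <= t ->
    sph_avg t (restr f (third Q')) (restr g (third_sub Q' k)) x = 0%E.
  move=> x t xin tB.
  rewrite /sph_avg /sphere_avg (@rint_pt R (d + d)) ?mule0 //; first by rewrite addn_gt0 hd.
  move=> u u0; case: ifP => // _.
  apply/eqP; rewrite eqe; apply/eqP; apply: core; [exact: sf | exact: sg | exact: xin | | exact: sumsq_norm].
  have : side Qt ^+ 2 *+ (d + d) < B by rewrite /B ltrDl.
  move: tB B1; set c := side Qt ^+ 2 *+ (d + d); nra.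
rewrite /pairing.
transitivity (rint (fun _ : 'rV[R]_d => 0%E)); last exact: rint0.
congr rint; apply: funext => x.
have [xin|xout] := pselect (cset Qt x); last by rewrite sh // mule0.
suff -> : maxop Q' k f g x = 0%E by rewrite mul0e.
rewrite /maxop.
set S := [set _ | _ in _].
have -> : S = [set 0%E].
  apply/seteqP; split.
  - move=> e [t tin <-]; rewrite /= sph0 //; apply: tge; rewrite inE; exact: tin.
  - move=> e -> /=; exists (2 ^ (Q'.2 - 4)).
      rewrite /= in_itv /= lexx /= ler_eXz2l //; lra.
    apply: sph0 => //; apply: tge.
    rewrite in_itv /= lexx /= ler_eXz2l //; lra.
exact: ereal_sup1.
Qed.
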